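(* Let $f:\mathbb{F}_{2^n}\to\mathbb{F}_{2^n}$ be APN. Then: (a) $M_1(f)+M_2(f)\geq 1$. For $n$ even, equality holds if and only if $f$ is almost-3-to-1. For $n$ odd, equality holds if and only if there is a unique element of $\mathrm{Im}(f)$ with exactly two preimages and all remaining elements of $\mathrm{Im}(f)$ have exactly three preimages. (b) $3M_1(f)+4M_2(f)+3M_3(f)\geq 2^n+2$, with equality if and only if $N(f)=3\cdot 2^n-2$ and $M_r(f)=0$ for all $r>4$; in that case $M_1(f)+M_2(f)=2M_4(f)+1$.
   Context: A map $f:\mathbb{F}_{2^n}\to\mathbb{F}_{2^n}$ is APN (almost perfect nonlinear) if for every $a\neq 0$ and every $b$, the equation $f(x+a)+f(x)=b$ has at most 2 solutions (i.e. $f$ is differentially 2-uniform). $M_r(f)$ is the number of $y$ with exactly $r$ preimages under $f$; $N(f)$ is the number of pairs $(x,y)$ with $f(x)=f(y)$. $f$ is almost-3-to-1 if there is a unique element of $\mathrm{Im}(f)$ with exactly one preimage and every other element of $\mathrm{Im}(f)$ has exactly 3 preimages. *)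

(* Defs.v *)
(* F_{2^n} is modelled as an arbitrary finite field F with #|F| = 2^n. *)
From HB Require Import structures.
From mathcomp Require Import all_boot all_order all_algebra all_field.
Set Implicit Arguments. Unset Strict Implicit. Unset Printing Implicit Defensive.
Import GRing.Theory.
Local Open Scope ring_scope.

Section Defs.
Variable F : finFieldType.

Definition APN (f : F -> F) : Prop :=
  forall a b : F, a != 0 -> leq #|[set x : F | f (x + a) + f x == b]| 2.

Definition npre (f : F -> F) (y : F) : nat := #|[set x : F | f x == y]|.

Definition Im (f : F -> F) : {set F} := [set f x | x in [set: F]].

Definition M (r : nat) (f : F -> F) : nat := #|[set y : F | npre f y == r]|.

Definition Npairs (f : F -> F) : nat := #|[set p : F * F | f p.1 == f p.2]|.

Definition almost_3_to_1 (f : F -> F) : Prop :=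
  exists y0 : F, [/\ y0 \in Im f, npre f y0 = 1%N &
    forall y, y \in Im f -> y != y0 -> npre f y = 3%N].
End Defs.

(* Main.v *)
Require Import Defs.
From mathcomp Require Import all_boot all_order all_algebra all_field.
From mathcomp Require Import zify.
Import GRing.Theory.
Set Implicit Arguments. Unset Strict Implicit. Unset Printing Implicit Defensive.

Lemma card_sum (T : finType) (P : pred T) : #|[set x | P x]| = \sum_x (P x : nat).
Proof. by rewrite -sum1dep_card big_mkcond /=; apply: eq_bigr => x _; case: (P x). Qed.

Lemma pow2mod3 n : exists q, 2 ^ n = 3 * q + (if odd n then 2 else 1).
Proof.
elim: n => [|n [q IH]]; first by exists 0.
rewrite expnS IH /=; case: (odd n) => /=.
  by exists (2 * q + 1); lia.
by exists (2 * q); lia.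
Qed.

Section S.
Variable F : finFieldType.
Variable f : F -> F.

Lemma sum_pred1 (x : F) : \sum_y ((f x == y) : nat) = 1.
Proof.
rewrite (bigD1 (f x)) //= eqxx big1 // => y hy.
by rewrite eq_sym (negbTE hy).
Qed.

Lemma sumK : \sum_y npre f y = #|F|.
Proof.
rewrite /npre; under eq_bigr do rewrite card_sum.
rewrite exchange_big /=; under eq_bigr do rewrite sum_pred1.
by rewrite sum1_card.
Qed.

Lemma NpairsE : Npairs f = \sum_y npre f y * npre f y.
Proof.
rewrite /Npairs card_sum -(pair_big predT predT (fun x y => ((f x == f y) : nat))) /=.
rewrite /npre; under [RHS]eq_bigr do rewrite !card_sum big_distrl /=.
rewrite [RHS]exchange_big /=; apply: eq_bigr => x _.
rewrite [RHS](bigD1 (f x)) //= eqxx mul1n.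
rewrite [X in _ = _ + X]big1 ?addn0.
  by apply: eq_bigr => y _; rewrite eq_sym.
by move=> z hz; rewrite eq_sym (negbTE hz).
Qed.

Lemma Npairs_le n (hF : #|F| = 2 ^ n) (hf : APN f) : Npairs f + 2 <= 3 * 2 ^ n.
Proof.
have ch : 2 \in [pchar F]%R by apply: (card_finPcharP hF).
have E1 : Npairs f = \sum_a \sum_x ((f x == f (x + a)%R) : nat).
  rewrite /Npairs card_sum -(pair_big predT predT (fun x y => ((f x == f y) : nat))) /=.
  rewrite [RHS]exchange_big /=; apply: eq_bigr => x _.
  by rewrite (reindex_inj (addrI x)).
have E2 : forall a : F, a != 0%R -> \sum_x ((f x == f (x + a)%R) : nat) <= 2.
  move=> a ha; have := hf a 0%R ha; rewrite card_sum.
  suff -> : \sum_x ((f x == f (x + a)%R) : nat) = \sum_x ((f (x + a)%R + f x == 0)%R : nat) by [].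
  by apply: eq_bigr => x _; rewrite addr_eq0 oppr_pchar2 // eq_sym.
have S2 : \sum_(a : F) 2 = 2 + \sum_(a : F | a != 0%R) 2.
  by rewrite (bigD1 (0%R:F)) //=.
have S3 : \sum_(a : F) 2 = #|F| * 2 by rewrite sum_nat_const.
have E3 : \sum_x ((f x == f (x + 0%R)%R) : nat) = #|F|.
  by under eq_bigr do rewrite addr0 eqxx; rewrite sum1_card.
have E4 : \sum_(a : F | a != 0%R) \sum_x ((f x == f (x + a)%R) : nat) <= \sum_(a : F | a != 0%R) 2.
  by apply: leq_sum => a ha; apply: E2.
rewrite E1 (bigD1 (0%R:F)) //= E3; rewrite hF in S3 *.
set X := \sum_(i | _) _.
have E5 : X <= \sum_(a : F | a != 0%R) 2.
  by apply: leq_sum => a ha; apply: E2.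
move: E5 S2 S3; generalize (\sum_(a : F | a != 0%R) 2) => Y.
generalize (\sum_(a : F) 2) => Z. lia.
Qed.


Definition ea k := if 3 < k then k * (k - 3) else 0.
Definition ha k := if 3 < k then k else 0.
Definition ga k := if 3 < k then k * (k - 4) else 0.

Lemma P1 k : k*k + 2*((k==1) + (k==2)) = 3*k + ea k.
Proof. rewrite /ea; case: k => [|[|[|[|k]]]] //=; nia. Qed.
Lemma P2 k : ea k = ha k + ga k.
Proof. rewrite /ea /ha /ga; case: k => [|[|[|[|k]]]] //=; nia. Qed.
Lemma P3 k : 3*(k==1) + 4*(k==2) + 3*(k==3) + ha k = k + 2*((k==1)+(k==2)).
Proof. rewrite /ha; case: k => [|[|[|[|k]]]] //=; nia. Qed.
Lemma P4 k : ga k = 0 -> k <= 4.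
Proof. rewrite /ga; case: k => [|[|[|[|k]]]] //=; nia. Qed.
Lemma P4' k : k <= 4 -> ga k = 0.
Proof. rewrite /ga; case: k => [|[|[|[|k]]]] //=; nia. Qed.
Lemma P5 k : k <= 4 -> ea k = 4*(k==4).
Proof. rewrite /ea; case: k => [|[|[|[|[|k]]]]] //=; nia. Qed.
Lemma P6 k : ea k = 0 -> k <= 3.
Proof. rewrite /ea; case: k => [|[|[|[|k]]]] //=; nia. Qed.
Lemma P7 k : k <= 3 -> k = (k==1) + 2*(k==2) + 3*(k==3).
Proof. case: k => [|[|[|[|k]]]] //=; nia. Qed.

Lemma MsumE r : M r f = \sum_y ((npre f y == r) : nat).
Proof. by rewrite /M card_sum. Qed.

Lemma sumD (u v : F -> nat) : \sum_y (u y + v y) = \sum_y u y + \sum_y v y.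
Proof. exact: big_split. Qed.
Lemma sumM c (u : F -> nat) : \sum_y (c * u y) = c * \sum_y u y.
Proof. by rewrite big_distrr. Qed.

Lemma Q1 : \sum_y (npre f y * npre f y) + 2 * (M 1 f + M 2 f) = 3 * \sum_y npre f y + \sum_y ea (npre f y).
Proof.
transitivity (\sum_y (npre f y * npre f y + 2 * ((npre f y == 1) + (npre f y == 2)))).
  by rewrite sumD sumM sumD !MsumE.
transitivity (\sum_y (3 * npre f y + ea (npre f y))).
  by apply: eq_bigr => y _; apply: P1.
by rewrite sumD sumM.
Qed.

Lemma Q2 : \sum_y ea (npre f y) = \sum_y ha (npre f y) + \sum_y ga (npre f y).
Proof. by rewrite -big_split; apply: eq_bigr => y _; apply: P2. Qed.

Lemma Q3 : 3 * M 1 f + 4 * M 2 f + 3 * M 3 f + \sum_y ha (npre f y) = \sum_y npre f y + 2 * (M 1 f + M 2 f).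
Proof.
transitivity (\sum_y (3*(npre f y==1) + 4*(npre f y==2) + 3*(npre f y==3) + ha (npre f y))).
  by rewrite sumD sumD sumD sumM sumM sumM !MsumE.
transitivity (\sum_y (npre f y + 2*((npre f y==1)+(npre f y==2)))).
  by apply: eq_bigr => y _; apply: P3.
by rewrite sumD sumM sumD !MsumE.
Qed.

Lemma sum0_each (u : F -> nat) y : \sum_z u z = 0 -> u y = 0.
Proof. by rewrite (bigD1 y) //=; lia. Qed.

Lemma Q4 : (forall y, npre f y <= 4) -> \sum_y ga (npre f y) = 0 /\ \sum_y ea (npre f y) = 4 * M 4 f.
Proof.
move=> h; split; first by rewrite big1 // => y _; apply: P4'.
rewrite MsumE -sumM; apply: eq_bigr => y _; exact: P5.
Qed.

Lemma Q5 : \sum_y ga (npre f y) = 0 -> forall y, npre f y <= 4.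
Proof. by move=> h y; apply: P4; exact: (sum0_each y h). Qed.

Lemma Q6 : \sum_y ea (npre f y) = 0 -> forall y, npre f y <= 3.
Proof. by move=> h y; apply: P6; exact: (sum0_each y h). Qed.

Lemma Q7 : (forall y, npre f y <= 3) -> \sum_y npre f y = M 1 f + 2 * M 2 f + 3 * M 3 f.
Proof.
move=> h; transitivity (\sum_y ((npre f y==1) + 2*(npre f y==2) + 3*(npre f y==3))).
  by apply: eq_bigr => y _; apply: P7.
by rewrite sumD sumD sumM sumM !MsumE.
Qed.

Lemma Q8 : (forall y, npre f y <= 4) <-> (forall r, 4 < r -> M r f = 0).
Proof.
split=> h.
  move=> r hr; apply/eqP; rewrite cards_eq0; apply/eqP/setP => y; rewrite !inE.
  by apply/negbTE; have := h y; lia.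
move=> y; rewrite leqNgt; apply/negP => hy.
have := h _ hy; move/eqP; rewrite cards_eq0 => /eqP/setP/(_ y).
by rewrite !inE eqxx.
Qed.

Lemma im_npre y : (y \in Im f) = (0 < npre f y).
Proof.
rewrite /Im /npre card_gt0; apply/imsetP/set0Pn => [[x _ ->]|[x]].
  by exists x; rewrite inE.
by rewrite inE => /eqP <-; exists x.
Qed.

Lemma charac r0 s0 : (r0 == 1) && (s0 == 2) || (r0 == 2) && (s0 == 1) ->
 (exists y0, [/\ y0 \in Im f, npre f y0 = r0 & forall y, y \in Im f -> y != y0 -> npre f y = 3]) <->
 [/\ M r0 f = 1, M s0 f = 0 & forall y, npre f y <= 3].
Proof.
move=> hrs.
have {hrs} hrs : (r0 = 1 /\ s0 = 2) \/ (r0 = 2 /\ s0 = 1).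
  by case/orP: hrs => /andP[/eqP -> /eqP ->]; [left|right].
split.
  case=> y0 [hy0 hr0 hy].
  have hall : forall y, npre f y <= 3.
    move=> y; case: (boolP (y \in Im f)) => hi.
      case: (eqVneq y y0) => [->|hne]; first by rewrite hr0; lia.
      by rewrite hy.
    by move: hi; rewrite im_npre; lia.
  split => //; rewrite /M.
    have -> : [set y | npre f y == r0] = [set y0].
      apply/setP => y; rewrite !inE; apply/eqP/eqP => [hyr|->//].
      apply/eqP; apply: contraT => hne.
      have hi : y \in Im f by rewrite im_npre hyr; lia.
      by move: (hy y hi hne); rewrite hyr; lia.
    by rewrite cards1.
  apply/eqP; rewrite cards_eq0; apply/eqP/setP => y; rewrite !inE.
  apply/negbTE/eqP => hys.
  have hi : y \in Im f by rewrite im_npre hys; lia.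
  case: (eqVneq y y0) => [hyy|hne].
    by move: hys; rewrite hyy hr0; lia.
  by move: (hy y hi hne); rewrite hys; lia.
case=> h1 h0 hall; rewrite /M in h0.
have /cards1P [y0 hy0] : #|[set y | npre f y == r0]| == 1 by apply/eqP; exact: h1.
have hr0 : npre f y0 = r0.
  by have := set11 y0; rewrite -hy0 inE => /eqP.
exists y0; split => //.
  by rewrite im_npre hr0; lia.
move=> y hi hne.
have h2 : npre f y != r0.
  apply/negP => /eqP hyr.
  have : y \in [set y | npre f y == r0] by rewrite inE hyr.
  by rewrite hy0 inE (negbTE hne).
have h3 : npre f y != s0.
  apply/negP => /eqP hyr.
  have := h0; move/eqP; rewrite cards_eq0 => /eqP/setP/(_ y).
  by rewrite !inE hyr eqxx.
move: hi (hall y) h2 h3; rewrite im_npre; lia.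
Qed.

End S.
Theorem corollary4p1 (F : finFieldType) (n : nat) (hF : #|F| = 2 ^ n)
    (f : F -> F) (hf : APN f) :
  (* (a) *)
  [/\ (1 <= M 1 f + M 2 f),
      (~~ odd n -> (M 1 f + M 2 f = 1 <-> almost_3_to_1 f)) &
      (odd n -> (M 1 f + M 2 f = 1 <->
         exists y0 : F, [/\ y0 \in Im f, npre f y0 = 2 &
           forall y, y \in Im f -> y != y0 -> npre f y = 3]))] /\
  (* (b) *)
  [/\ (2 ^ n + 2 <= 3 * M 1 f + 4 * M 2 f + 3 * M 3 f),
      (3 * M 1 f + 4 * M 2 f + 3 * M 3 f = 2 ^ n + 2 <->
         Npairs f = 3 * 2 ^ n - 2 /\ (forall r, 4 < r -> M r f = 0)) &
      (3 * M 1 f + 4 * M 2 f + 3 * M 3 f = 2 ^ n + 2 ->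
         M 1 f + M 2 f = 2 * M 4 f + 1)].
Proof.
have hK := sumK f; rewrite hF in hK.
have hN := Npairs_le hF hf; rewrite NpairsE in hN.
have q1 := Q1 f; have q2 := Q2 f; have q3 := Q3 f.
have [q hq] := pow2mod3 n.
split; split.
- lia.
- move=> hev; rewrite (negbTE hev) in hq; rewrite /almost_3_to_1.
  rewrite (charac f (r0:=1) (s0:=2)) //.
  split.
    move=> hA; have hE : \sum_y ea (npre f y) = 0 by lia.
    have h3 := Q6 hE; have q7 := Q7 h3.
    split => //; lia.
  by case=> h1 h2 _; lia.
- move=> hod; rewrite hod in hq.
  rewrite (charac f (r0:=2) (s0:=1)) //.
  split.
    move=> hA; have hE : \sum_y ea (npre f y) = 0 by lia.
    have h3 := Q6 hE; have q7 := Q7 h3.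
    split => //; lia.
  by case=> h1 h2 _; lia.
- lia.
- split.
    move=> hB; have hG : \sum_y ga (npre f y) = 0 by lia.
    split; first by rewrite NpairsE; lia.
    by apply/Q8/Q5.
  case=> hNp hM; rewrite NpairsE in hNp.
  have [hG _] := Q4 (proj2 (Q8 f) hM); lia.
- move=> hB; have hG : \sum_y ga (npre f y) = 0 by lia.
  have [_ hE] := Q4 (Q5 hG); lia.
Qed.
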